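(* Let $m\in[\frac n3,\frac n2-1]$ be an integer and $\delta\in(0,2)$. Let $x$ be a random bit string in $\{0,1\}^n$ such that $\mathrm{DLB}(x)=2m+1$ and such that the bits $x_i$, $i\in[2m+3..n]$, are mutually independent, independent of the other bits, and uniformly distributed in $\{0,1\}$. Let $y$ be generated from $x$ by a unary unbiased variation operator $V$, and let $Y=(\mathrm{HLB}_\delta(y)-\mathrm{HLB}_\delta(x))\mathbb{1}_{\mathrm{DLB}(y)\ge\mathrm{DLB}(x)}$. Then $E[Y]\le\frac{16}{n^2}$.
   Context: Let $n$ be an even positive integer. For $x\in\{0,1\}^n$ consider the blocks $(x_{2\ell+1},x_{2\ell+2})$, $\ell=0,\dots,\frac n2-1$. If $x\neq(1,\dots,1)$, let $m$ be the smallest $\ell$ with $x_{2\ell+1}\neq 1$ or $x_{2\ell+2}\neq 1$, and define $\mathrm{DLB}(x)=2m+1$ if $x_{2m+1}+x_{2m+2}=0$ and $\mathrm{DLB}(x)=2m$ if $x_{2m+1}+x_{2m+2}=1$; set $\mathrm{DLB}(1,\dots,1)=n$. For $\delta\in(0,2)$, $\mathrm{HLB}_\delta(x)=2m$ if $\mathrm{DLB}(x)=2m+1$, $\mathrm{HLB}_\delta(x)=2m+2-\delta$ if $\mathrm{DLB}(x)=2m$ (for $m\in\{0,\dots,\frac n2-1\}$), and $\mathrm{HLB}_\delta(x)=n$ if $\mathrm{DLB}(x)=n$. A unary unbiased variation operator $V$ assigns to each $x\in\{0,1\}^n$ a probability distribution $V(x)$ on $\{0,1\}^n$ such that for all $x,y,z$,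 $\Pr[y=V(x)]=\Pr[y\oplus z=V(x\oplus z)]$, and for all permutations $\sigma$ of $[1..n]$, $\Pr[y=V(x)]=\Pr[\sigma(y)=V(\sigma(x))]$, where $\sigma(x)=(x_{\sigma(1)},\dots,x_{\sigma(n)})$. *)

(* Defs.v *)
(* Bit strings of length n are n.-tuple bool; the paper's bit
   x_i (1-based) is tnth x (i-1) (0-based index). *)
From HB Require Import structures.
From mathcomp Require Import all_boot all_order all_algebra all_fingroup.
Set Implicit Arguments. Unset Strict Implicit. Unset Printing Implicit Defensive.
Import Order.TTheory GRing.Theory Num.Theory.
Local Open Scope ring_scope.

Definition bits (n : nat) := (n.-tuple bool).

Definition xor_bits n (x z : bits n) : bits n := [tuple tnth x i (+) tnth z i | i < n].

Definition perm_bits n (s : {perm 'I_n}) (x : bits n) : bits n := [tuple tnth x (s i) | i < n].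

Definition bit n (x : bits n) (k : nat) : bool := nth false x k.

(* smallest block index l (0-based) such that block (x_{2l+1},x_{2l+2}) is not (1,1);
   equals n./2 if no such block *)
Definition first_block n (x : bits n) : nat :=
  find (fun l => ~~ (bit x (2 * l) && bit x (2 * l).+1)) (iota 0 n./2).

Definition DLB n (x : bits n) : nat :=
  let l := first_block x in
  if l == n./2 then n
  else if ~~ bit x (2 * l) && ~~ bit x (2 * l).+1 then (2 * l).+1 else 2 * l.

Definition HLB (R : numDomainType) n (delta : R) (x : bits n) : R :=
  let l := first_block x in
  if l == n./2 then n%:R
  else if ~~ bit x (2 * l) && ~~ bit x (2 * l).+1 then (2 * l)%:R
  else (2 * l + 2)%:R - delta.

(* V x y = Pr[y = V(x)] *)
Definition unary_unbiased (R : numDomainType) n (V : bits n -> bits n -> R) : Prop :=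
  [/\ (forall x y, 0 <= V x y),
      (forall x, \sum_(y : bits n) V x y = 1),
      (forall x y z, V x y = V (xor_bits x z) (xor_bits y z)) &
      (forall (s : {perm 'I_n}) x y, V x y = V (perm_bits s x) (perm_bits s y))].

Definition is_distr (R : numDomainType) n (p : bits n -> R) : Prop :=
  (forall x, 0 <= p x) /\ \sum_(x : bits n) p x = 1.

(* x and u agree on 0-based positions < k (paper: positions 1..k) *)
Definition agree_prefix n (k : nat) (x u : bits n) : bool :=
  [forall i : 'I_n, (i < k)%N ==> (tnth x i == tnth u i)].
(* x and w agree on 0-based positions >= k (paper: positions k+1..n) *)
Definition agree_suffix n (k : nat) (x w : bits n) : bool :=
  [forall i : 'I_n, (k <= i)%N ==> (tnth x i == tnth w i)].

(* Main.v *)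
Require Import Defs.
From HB Require Import structures.
From mathcomp Require Import all_boot all_order all_algebra all_fingroup.
From mathcomp Require Import zify ring lra.
Import Order.TTheory GRing.Theory Num.Theory.
Set Implicit Arguments. Unset Strict Implicit. Unset Printing Implicit Defensive.
Local Open Scope ring_scope.

Lemma find_iota_eq (p : pred nat) N l :
  (l < N)%N -> p l -> (forall j, (j < l)%N -> ~~ p j) -> find p (iota 0 N) = l.
Proof.
move=> lN pl hj.
have hs : has p (iota 0 N) by apply/hasP; exists l => //; rewrite mem_iota.
have := has_find p (iota 0 N); rewrite hs size_iota => /esym fN.
case: (ltngtP (find p (iota 0 N)) l) => // h.
- have := nth_find 0%N hs; rewrite nth_iota // add0n => pf.
  by rewrite (negbTE (hj _ h)) in pf.
- have := before_find 0%N h; rewrite nth_iota ?add0n // => pf.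
  by rewrite pl in pf.
Qed.

Lemma find_iota_ge (p : pred nat) N l :
  (l <= N)%N -> (forall j, (j < l)%N -> ~~ p j) -> (l <= find p (iota 0 N))%N.
Proof.
move=> lN hj; rewrite leqNgt; apply/negP => h.
have hs : has p (iota 0 N) by rewrite has_find size_iota; lia.
have := nth_find 0%N hs; rewrite nth_iota ?add0n; last by lia.
by rewrite (negbTE (hj _ h)).
Qed.

Lemma find_iota_before (p : pred nat) N j :
  (j < find p (iota 0 N))%N -> ~~ p j.
Proof.
move=> h; have := before_find 0%N h.
have := find_size p (iota 0 N); rewrite size_iota => hs.
by rewrite nth_iota ?add0n => [->|]; last lia.
Qed.

Lemma find_iota_at (p : pred nat) N :
  (find p (iota 0 N) < N)%N -> p (find p (iota 0 N)).
Proof.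
move=> h; have hs : has p (iota 0 N) by rewrite has_find size_iota.
by have := nth_find 0%N hs; rewrite nth_iota ?add0n.
Qed.

Lemma find_iota_le (p : pred nat) N : (find p (iota 0 N) <= N)%N.
Proof. by have := find_size p (iota 0 N); rewrite size_iota. Qed.

Definition pb n (y : bits n) (l : nat) : bool := ~~ (bit y (2 * l) && bit y (2 * l).+1).

Lemma fbE n (y : bits n) : first_block y = find (pb y) (iota 0 n./2).
Proof. by []. Qed.

Lemma fb_before n (y : bits n) j : (j < first_block y)%N -> bit y (2 * j) && bit y (2 * j).+1.
Proof. by rewrite fbE => /find_iota_before; rewrite negbK. Qed.

Lemma fb_le n (y : bits n) : (first_block y <= n./2)%N.
Proof. exact: find_iota_le. Qed.

Lemma fb_at n (y : bits n) : (first_block y < n./2)%N ->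
  ~~ (bit y (2 * first_block y) && bit y (2 * first_block y).+1).
Proof. by rewrite fbE => /find_iota_at. Qed.

Lemma fb_ge n (y : bits n) l : (l <= n./2)%N ->
  (forall j, (j < l)%N -> bit y (2 * j) && bit y (2 * j).+1) -> (l <= first_block y)%N.
Proof. by move=> h1 h2; rewrite fbE; apply: find_iota_ge => // j /h2; rewrite /pb negbK. Qed.

Lemma fb_eq n (y : bits n) l : (l < n./2)%N -> ~~ (bit y (2 * l) && bit y (2 * l).+1) ->
  (forall j, (j < l)%N -> bit y (2 * j) && bit y (2 * j).+1) -> first_block y = l.
Proof. by move=> h1 h2 h3; rewrite fbE; apply: find_iota_eq => // j /h3; rewrite /pb negbK. Qed.

Lemma blocks_pre n (y : bits n) k :
  (forall j, (j < k)%N -> bit y (2 * j) && bit y (2 * j).+1) -> forall i, (i < 2 * k)%N -> bit y i.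
Proof.
move=> h i hi.
have hj : (i %/ 2 < k)%N by lia.
have := h _ hj => /andP [h1 h2].
have : (i = 2 * (i %/ 2) \/ i = (2 * (i %/ 2)).+1)%N by lia.
by case=> ->.
Qed.

Lemma pre_blocks n (y : bits n) k :
  (forall i, (i < 2 * k)%N -> bit y i) -> forall j, (j < k)%N -> bit y (2 * j) && bit y (2 * j).+1.
Proof. by move=> h j hj; rewrite !h //; lia. Qed.

Definition pre1 n (k : nat) (y : bits n) : bool := [forall i : 'I_n, (i < k)%N ==> tnth y i].

Lemma pre1P n k (y : bits n) : (k <= n)%N -> reflect (forall i, (i < k)%N -> bit y i) (pre1 k y).
Proof.
move=> kn; apply: (iffP forallP) => [h i ik | h i].
  have iN : (i < n)%N by lia.
  by have := h (Ordinal iN); rewrite ik /= (tnth_nth false).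
by apply/implyP => ik; rewrite (tnth_nth false); apply: h.
Qed.

Lemma dlb_x n m (x : bits n) : n = 2 * n./2 -> DLB x = (2 * m).+1 ->
  [/\ first_block x = m, (m < n./2)%N, (forall i, (i < 2 * m)%N -> bit x i), ~~ bit x (2 * m) & ~~ bit x (2 * m).+1].
Proof.
move=> hn; rewrite /DLB /=.
case: ifP => [_ |/eqP hN]; first lia.
case: ifP => [/andP [h1 h2] /eqP | _ ]; last lia.
rewrite eqSS => /eqP hl.
have fm : first_block x = m by lia.
have := fb_le x => hle.
split; [done | lia | | by rewrite -fm | by rewrite -fm].
by apply: blocks_pre => j; rewrite -fm; apply: fb_before.
Qed.

Lemma hlb_x (R : numDomainType) n m (delta : R) (x : bits n) : n = 2 * n./2 -> DLB x = (2 * m).+1 ->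
  HLB delta x = (2 * m)%:R.
Proof.
move=> hn hd; have [fm mN _ h1 h2] := dlb_x hn hd.
by rewrite /HLB /= fm; case: ifP => [/eqP|]; [lia|]; rewrite h1 h2.
Qed.

Lemma pre_fb n m (y : bits n) : n = 2 * n./2 -> (2 * m + 2 <= n)%N ->
  (forall i, (i < 2 * m + 2)%N -> bit y i) -> (m.+1 <= first_block y)%N.
Proof.
move=> hn hmn h; apply: fb_ge; first lia.
by apply: pre_blocks => i hi; apply: h; lia.
Qed.

Lemma fb_pre n m (y : bits n) : (m.+1 <= first_block y)%N ->
  (forall i, (i < 2 * m + 2)%N -> bit y i).
Proof.
move=> h i hi; apply: (@blocks_pre n y m.+1) => [j hj|]; [apply: fb_before; lia | lia].
Qed.

Lemma dlb_y (R : numDomainType) n m (delta : R) (y : bits n) : n = 2 * n./2 -> (2 * m + 2 <= n)%N ->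
  ((2 * m).+1 <= DLB y)%N ->
  (forall i, (i < 2 * m + 2)%N -> bit y i) \/ HLB delta y = (2 * m)%:R.
Proof.
move=> hn hmn; rewrite /DLB /HLB /=.
case: ifP => [/eqP hN _ | /eqP hN]; first by left; apply: fb_pre; lia.
case: ifP => [_ hl | _ hl].
  have [->|ne] := eqVneq (first_block y) m; first by right.
  by left; apply: fb_pre; lia.
by left; apply: fb_pre; lia.
Qed.

Lemma hlb_pre (R : realFieldType) n m (delta : R) (y : bits n) : n = 2 * n./2 -> (2 * m + 2 <= n)%N ->
  delta < 2 ->
  (forall i, (i < 2 * m + 2)%N -> bit y i) -> ((2 * m)%:R <= HLB delta y).
Proof.
move=> hn hmn hd h; have := pre_fb hn hmn h; rewrite /HLB /=.
set l := first_block y => hl.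
case: ifP => _; first by rewrite ler_nat; lia.
case: ifP => _; first by rewrite ler_nat; lia.
have : ((2 * m + 2)%:R <= (2 * l + 2)%:R :> R) by rewrite ler_nat; lia.
rewrite natrD; lra.
Qed.

Lemma bit_tnth n (x : bits n) (i : 'I_n) : bit x i = tnth x i.
Proof. by rewrite (tnth_nth false). Qed.

Lemma bit_ord n (x : bits n) i (h : (i < n)%N) : bit x i = tnth x (Ordinal h).
Proof. by rewrite (tnth_nth false). Qed.

Definition mk n (P : nat -> bool) : bits n := [tuple P (nat_of_ord j) | j < n].

Lemma bit_mk n (P : nat -> bool) i : (i < n)%N -> bit (mk n P) i = P i.
Proof. by move=> h; rewrite (bit_ord _ h) tnth_mktuple. Qed.

Lemma bit_xor n (x z : bits n) i : (i < n)%N -> bit (xor_bits x z) i = bit x i (+) bit z i.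
Proof. by move=> h; rewrite /xor_bits (bit_ord _ h) tnth_mktuple !(bit_ord _ h). Qed.

Lemma xorK n (z : bits n) : involutive (fun x : bits n => xor_bits x z).
Proof. by move=> x; apply: eq_from_tnth => i; rewrite /xor_bits !tnth_mktuple addbK. Qed.

Lemma xorC n (x z : bits n) : xor_bits x z = xor_bits z x.
Proof. by apply: eq_from_tnth => i; rewrite /xor_bits !tnth_mktuple addbC. Qed.

Lemma reindex_xor (R : numDomainType) n (z : bits n) (P : pred (bits n)) (F : bits n -> R) :
  \sum_(y | P y) F y = \sum_(x | P (xor_bits x z)) F (xor_bits x z).
Proof. by apply: reindex_inj; apply: inv_inj; apply: xorK. Qed.

Lemma hlb_full (R : numDomainType) n (delta : R) (y : bits n) : n = (2 * n./2)%N -> pre1 n y -> HLB delta y = n%:R.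
Proof.
move=> hn /(pre1P _ (leqnn n)) h.
have : first_block y = n./2.
  apply/eqP; rewrite eqn_leq fb_le /=; apply: fb_ge => //.
  by apply: pre_blocks => i hi; apply: h; lia.
by rewrite /HLB /= => ->; rewrite eqxx.
Qed.

Lemma hlb_00 (R : numDomainType) n (delta : R) (y : bits n) a : (a < n./2)%N -> n = (2 * n./2)%N ->
  pre1 (2 * a) y -> ~~ bit y (2 * a) -> ~~ bit y (2 * a).+1 -> HLB delta y = (2 * a)%:R.
Proof.
move=> ha hn /(pre1P _ _) h h1 h2.
have : first_block y = a.
  apply: fb_eq => //; first by rewrite (negbTE h1).
  by apply: pre_blocks; apply: h; lia.
by rewrite /HLB /= => ->; rewrite h1 h2 /=; case: eqP => //; lia.
Qed.

Lemma hlb_01 (R : numDomainType) n (delta : R) (y : bits n) a : (a < n./2)%N -> n = (2 * n./2)%N ->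
  pre1 (2 * a) y -> ~~ (bit y (2 * a) && bit y (2 * a).+1) -> ~~ (~~ bit y (2 * a) && ~~ bit y (2 * a).+1) ->
  HLB delta y = (2 * a + 2)%:R - delta.
Proof.
move=> ha hn /(pre1P _ _) h h1 h2.
have : first_block y = a.
  apply: fb_eq => //.
  by apply: pre_blocks; apply: h; lia.
by rewrite /HLB /= => ->; rewrite (negbTE h2) /=; case: eqP => //; lia.
Qed.

Lemma pre1_11 n (y : bits n) a : (2 * a + 2 <= n)%N ->
  pre1 (2 * a) y && (bit y (2 * a) && bit y (2 * a).+1) = pre1 (2 * a + 2) y.
Proof.
move=> ha; apply/idP/idP.
  case/andP => /(pre1P _ _) h /andP [h1 h2]; apply/(pre1P _ ha) => i hi.
  have : (i < 2 * a \/ i = 2 * a \/ i = (2 * a).+1)%N by lia.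
  by case=> [/h|[->|->]] //; lia.
move/(pre1P _ ha) => h; apply/andP; split; first by apply/(pre1P _ _) => [|i hi]; [lia| apply: h; lia].
by rewrite !h //; lia.
Qed.

Lemma pre1_eq n (x y : bits n) k : (k <= n)%N -> (forall i, (i < k)%N -> bit x i = bit y i) -> pre1 k x = pre1 k y.
Proof.
move=> kn h; apply/idP/idP => /(pre1P _ kn) H; apply/(pre1P _ kn) => i hi; first by rewrite -h ?H.
by rewrite h ?H.
Qed.

Lemma mask00 n (x : bits n) a : (2 * a + 2 <= n)%N ->
  let M := mk n (fun i => (i == 2 * a)%N || (i == (2 * a).+1)%N) in
  let y := xor_bits x M in
  (pre1 (2 * a) y && ~~ (bit y (2 * a) && bit y (2 * a).+1)) && (~~ bit y (2 * a) && ~~ bit y (2 * a).+1)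
  = pre1 (2 * a + 2) x.
Proof.
move=> ha M y; rewrite -pre1_11 //.
have e1 : bit y (2 * a) = ~~ bit x (2 * a).
  by rewrite /y bit_xor ?bit_mk ?eqxx ?addbT //; lia.
have e2 : bit y (2 * a).+1 = ~~ bit x (2 * a).+1.
  by rewrite /y bit_xor ?bit_mk ?eqxx ?orbT ?addbT //; lia.
have e3 : pre1 (2 * a) y = pre1 (2 * a) x.
  apply: pre1_eq; first lia.
  move=> i hi.
  by rewrite /y bit_xor ?bit_mk; lia.
by rewrite e1 e2 e3 !negbK; case: (pre1 _ x); case: (bit x _); case: (bit x _).
Qed.

Lemma hlb_sum (R : realFieldType) n (delta : R) : n = (2 * n./2)%N -> 0 < delta ->
  forall t a, (a + t = n./2)%N ->
  \sum_(y : bits n | pre1 (2 * a) y) (HLB delta y - (2 * a + 2)%:R) <= 0.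
Proof.
move=> hn hd; elim=> [|t IH] a hat.
  apply: sumr_le0 => y hy.
  have e : (2 * a = n)%N by lia.
  rewrite e in hy; rewrite hlb_full // e natrD; lra.
have ha : (2 * a + 2 <= n)%N by lia.
have IH' := IH a.+1 ltac:(lia).
have e : (2 * a.+1 = 2 * a + 2)%N by lia.
rewrite e in IH'.
rewrite (bigID (fun y => bit y (2 * a) && bit y (2 * a).+1)) /=.
rewrite [X in _ + X](bigID (fun y => ~~ bit y (2 * a) && ~~ bit y (2 * a).+1)) /=.
set S11 := \sum_(i | _ && (_ && _)) _.
have -> : S11 = \sum_(y : bits n | pre1 (2 * a + 2) y) (HLB delta y - (2 * a + 2 + 2)%:R)
              + \sum_(y : bits n | pre1 (2 * a + 2) y) 2.
  rewrite -big_split /S11 /=.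
  apply: eq_big => [y|y _]; first by rewrite pre1_11.
  rewrite !natrD; ring.
set S00 := \sum_(i | _ && _) _.
have -> : S00 = - \sum_(y : bits n | pre1 (2 * a + 2) y) 2.
  rewrite /S00 (reindex_xor (mk n (fun i => (i == 2 * a)%N || (i == (2 * a).+1)%N))).
  rewrite -sumrN; apply: eq_big => [y|y hy]; first by rewrite mask00.
  move: hy => /andP [/andP [hp _] /andP [h1 h2]].
  rewrite (hlb_00 delta _ hn hp h1 h2); last lia.
  rewrite natrD; ring.
have : \sum_(i : bits n | (pre1 (2 * a) i && ~~ (bit i (2 * a) && bit i (2 * a).+1)) &&
          ~~ (~~ bit i (2 * a) && ~~ bit i (2 * a).+1)) (HLB delta i - (2 * a + 2)%:R) <= 0.
  apply: sumr_le0 => y /andP [/andP [hp h1] h2].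
  rewrite (hlb_01 delta _ hn hp h1 h2); last lia.
  lra.
lra.
Qed.

Local Close Scope ring_scope.

Definition wt n (d : bits n) : nat := count id d.
Definition setof n (d : bits n) : {set 'I_n} := [set i | tnth d i].
Definition tup n (S : {set 'I_n}) : bits n := [tuple (i \in S) | i < n].
Definition Aset n m (d : bits n) : bool :=
  [forall i : 'I_n, (i < 2 * m + 2)%N ==> (tnth d i == (2 * m <= i)%N)].
Definition gsuf n m (d : bits n) : {set 'I_n} := [set i : 'I_n | (2 * m + 2 <= i)%N && tnth d i].

Lemma card_setof n (d : bits n) : #|setof d| = wt d.
Proof.
rewrite /wt -(map_tnth_enum d) count_map cardE size_filter enumT.
by apply: eq_count => i; rewrite /= inE.
Qed.

Lemma setof_tup n (S : {set 'I_n}) : setof (tup S) = S.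
Proof. by apply/setP => i; rewrite inE tnth_mktuple. Qed.

Lemma wt_tup n (S : {set 'I_n}) : wt (tup S) = #|S|.
Proof. by rewrite -card_setof setof_tup. Qed.

Lemma card_W n r : ('C(n, r) <= #|[set d : bits n | wt d == r]|)%N.
Proof.
rewrite -{1}(card_ord n) -card_draws.
rewrite -(card_imset _ (can_inj (@setof_tup n))).
apply: subset_leq_card; apply/subsetP => d /imsetP [S]; rewrite !inE => hS ->.
by rewrite wt_tup.
Qed.

Lemma card_two n m : (2 * m + 2 <= n)%N ->
  #|[pred i : 'I_n | (2 * m <= i < 2 * m + 2)%N]| = 2.
Proof.
move=> h.
have h1 : (2 * m < n)%N by lia.
have h2 : ((2 * m).+1 < n)%N by lia.
have -> : #|[pred i : 'I_n | (2 * m <= i < 2 * m + 2)%N]| = #|[set Ordinal h1; Ordinal h2]|.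
  apply: eq_card => i; rewrite !inE -!val_eqE /=; lia.
rewrite cards2; case: eqP => // /(congr1 val) /=; lia.
Qed.

Lemma wt_A n m (d : bits n) : (2 * m + 2 <= n)%N -> Aset m d -> wt d = (#|gsuf m d| + 2)%N.
Proof.
move=> h /forallP hA.
rewrite -card_setof -(cardID [pred i : 'I_n | (2 * m + 2 <= i)%N]).
congr (_ + _)%N.
  by apply: eq_card => i; rewrite !inE andbC.
rewrite -[RHS](card_two h); apply: eq_card => i; rewrite !inE.
case: (ltnP i (2 * m + 2)) => hi /=.
  by have := hA i; rewrite hi /= => /eqP ->; rewrite andbT.
by rewrite andbF.
Qed.

Lemma gsuf_inj n m (d1 d2 : bits n) : Aset m d1 -> Aset m d2 -> gsuf m d1 = gsuf m d2 -> d1 = d2.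
Proof.
move=> /forallP h1 /forallP h2 he; apply: eq_from_tnth => i.
case: (ltnP i (2 * m + 2)) => hi.
  by have := h1 i; have := h2 i; rewrite hi /= => /eqP -> /eqP ->.
by move/setP: he => /(_ i); rewrite !inE hi.
Qed.

Lemma card_suf n k : (k <= n)%N -> (#|[set i : 'I_n | (k <= i)%N]| <= n - k)%N.
Proof.
move=> kn.
have hf : forall j : 'I_(n - k), (k + j < n)%N by move=> j; have := ltn_ord j; lia.
apply: (@leq_trans #|[set Ordinal (hf j) | j : 'I_(n - k)]|); last first.
  by apply: leq_trans (leq_imset_card _ _) _; rewrite card_ord.
apply: subset_leq_card; apply/subsetP => i; rewrite inE => hi.
have hj : (i - k < n - k)%N by have := ltn_ord i; lia.
apply/imsetP; exists (Ordinal hj) => //; apply: val_inj => /=; lia.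
Qed.

Lemma card_AW n m r : (2 * m + 2 <= n)%N ->
  (#|[set d : bits n | Aset m d && (wt d == r)]| <= 'C(n - (2 * m + 2), r - 2))%N
  /\ ((r < 2)%N -> #|[set d : bits n | Aset m d && (wt d == r)]| = 0%N).
Proof.
move=> h; split; last first.
  move=> hr; apply/eqP; rewrite cards_eq0; apply/eqP/setP => d; rewrite !inE.
  apply/negbTE/andP => [[hA /eqP hw]]; have := wt_A h hA; lia.
set AW := [set d | _].
rewrite -(@card_in_imset _ _ (@gsuf n m)); last first.
  by move=> d1 d2; rewrite !inE => /andP [h1 _] /andP [h2 _]; apply: gsuf_inj.
apply: (@leq_trans 'C(#|[set i : 'I_n | (2 * m + 2 <= i)%N]|, r - 2)); last first.
  by apply: leq_bin2l; apply: card_suf.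
rewrite -cards_draws; apply: subset_leq_card; apply/subsetP => C /imsetP [d].
rewrite inE => /andP [hA /eqP hw] ->; rewrite inE; apply/andP; split.
  by apply/subsetP => i; rewrite !inE => /andP [].
have := wt_A h hA; rewrite hw => ->; by rewrite addnK.
Qed.

Lemma bin3 N L s : (3 * L <= N)%N -> (3 ^ s * 'C(L, s) <= 'C(N, s))%N.
Proof.
move=> hL; elim: s => [|s IH]; first by rewrite !bin0.
rewrite -(leq_pmul2l (ltn0Sn s)) !mul_bin_left expnS.
have e : (s.+1 * (3 * 3 ^ s * 'C(L, s.+1)) = 3 * 3 ^ s * (s.+1 * 'C(L, s.+1)))%N.
  by rewrite mulnCA.
rewrite e mul_bin_left.
have e2 : (3 * 3 ^ s * ((L - s) * 'C(L, s)) = (3 * (L - s)) * (3 ^ s * 'C(L, s)))%N.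
  by ring.
rewrite e2; apply: leq_mul => //; lia.
Qed.

Lemma sq_bound s : (s.+2 * s.+1 <= 2 * 3 ^ s)%N.
Proof.
elim: s => [//|s IH]; rewrite expnS.
have : (s.+3 * s.+2 <= 3 * (s.+2 * s.+1))%N by nia.
lia.
Qed.

Lemma final_bin n L s : (3 * L + 2 <= n)%N -> ('C(L, s) * (n * (n - 1)) <= 2 * 'C(n, s.+2))%N.
Proof.
move=> h.
have e1 := mul_bin_diag n s.+1.
have e2 := mul_bin_diag n.-1 s.
have hb : (3 ^ s * 'C(L, s) <= 'C(n.-2, s))%N by apply: bin3; lia.
have hq := sq_bound s.
rewrite -(leq_pmul2l (_ : 0 < s.+2 * s.+1)%N) //.
have -> : (s.+2 * s.+1 * (2 * 'C(n, s.+2)) = 2 * (n * (n.-1 * 'C(n.-2, s))))%N.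
  by rewrite e2 [(n * (_ * _))%N]mulnCA e1; ring.
have -> : (n - 1 = n.-1)%N by lia.
apply: (@leq_trans ('C(L, s) * (n * n.-1) * (2 * 3 ^ s))).
  by rewrite mulnC; apply: leq_mul.
have -> : ('C(L, s) * (n * n.-1) * (2 * 3 ^ s) = 2 * (n * (n.-1 * (3 ^ s * 'C(L, s)))))%N by ring.
by rewrite !leq_mul2l hb !orbT.
Qed.

Local Open Scope ring_scope.

Lemma count_bool (P : pred bool) (s : seq bool) :
  count P s = (P true * count id s + P false * (size s - count id s))%N.
Proof.
elim: s => [|b s IH] /=; first by rewrite !muln0.
rewrite IH.
have := count_size id s.
by case: b; case: (P true); case: (P false) => /=; lia.
Qed.

Lemma wt_perm n (d e : bits n) : wt d = wt e -> exists s : {perm 'I_n}, e = perm_bits s d.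
Proof.
move=> hw.
have hp : perm_eq (tval e) (tval d).
  by apply/seq.permP => P; rewrite (count_bool P (tval e)) (count_bool P (tval d)) !size_tuple; rewrite /wt in hw; rewrite hw.
by case/tuple_permP: hp => s hs; exists s; exact: (val_inj hs).
Qed.

Definition zb n : bits n := mk n (fun _ => false).

Lemma perm_zb n (s : {perm 'I_n}) : perm_bits s (zb n) = zb n.
Proof. by apply: eq_from_tnth => i; rewrite /perm_bits /zb /mk !tnth_mktuple. Qed.

Lemma f_inv (R : numDomainType) n (V : bits n -> bits n -> R) : unary_unbiased V ->
  forall d e, wt d = wt e -> V (zb n) d = V (zb n) e.
Proof.
case=> _ _ _ hperm d e hw; have [s ->] := wt_perm hw.
by rewrite (hperm s (zb n) d) perm_zb.
Qed.

Lemma nat_AW n m r : (2 * m + 2 <= n)%N -> (3 * (n - (2 * m + 2)) + 2 <= n)%N ->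
  (#|[set d : bits n | Aset m d && (wt d == r)]| * (n * (n - 1)) <= 2 * #|[set d : bits n | wt d == r]|)%N.
Proof.
move=> h1 h2.
case: (ltnP r 2) => hr; first by have [_ h0] := card_AW r h1; rewrite h0.
have {hr} [s ->] : exists s, r = s.+2 by exists (r - 2)%N; lia.
have [hc _] := card_AW s.+2 h1.
apply: leq_trans (_ : 2 * 'C(n, s.+2) <= _)%N; last by rewrite leq_mul2l card_W orbT.
apply: leq_trans (final_bin s h2).
have e : (s.+2 - 2 = s)%N by lia.
rewrite e in hc.
by rewrite leq_mul2r hc orbT.
Qed.

Lemma Q_bound (R : realFieldType) n m (f : bits n -> R) :
  (forall d, 0 <= f d) -> \sum_(d : bits n) f d = 1 -> (forall d e, wt d = wt e -> f d = f e) ->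
  (2 * m + 2 <= n)%N -> (3 * (n - (2 * m + 2)) + 2 <= n)%N ->
  \sum_(d : bits n | Aset m d) f d <= 2 / (n * (n - 1))%:R.
Proof.
move=> f0 f1 finv h1 h2.
have wtn : forall d : bits n, (wt d < n.+1)%N by move=> d; rewrite ltnS /wt -{2}(size_tuple d) count_size.
pose p (d : bits n) : 'I_n.+1 := Ordinal (wtn d).
have split : forall P : pred (bits n), \sum_(d | P d) f d =
    \sum_(r < n.+1) \sum_(d | P d && (wt d == r)) f d.
  move=> P; rewrite (partition_big p predT) //; apply: eq_bigr => r _.
have Dpos : 0 < (n * (n - 1))%:R :> R by rewrite ltr0n muln_gt0; apply/andP; split; lia.
have hsum : \sum_(r < n.+1) \sum_(d | predT d && (wt d == r)) f d = 1 by rewrite -(split predT) f1.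
rewrite split.
apply: (@le_trans _ _ (\sum_(r < n.+1) (2 / (n * (n - 1))%:R * \sum_(d | predT d && (wt d == r)) f d))); last first.
  by rewrite -mulr_sumr hsum mulr1.
apply: ler_sum => r _.
case: (pickP (fun d : bits n => wt d == r)) => [d0 hd0 | hnone]; last first.
  rewrite big_pred0 => [|d]; last by rewrite hnone andbF.
  apply: mulr_ge0; first by apply: divr_ge0; [done | exact: ltW].
  by apply: sumr_ge0 => d _.
have fe : forall d, wt d == r -> f d = f d0 by move=> d /eqP hd; apply: finv; move/eqP: hd0 => ->.
have -> : \sum_(d | Aset m d && (wt d == r)) f d =
    \sum_(d in [set d : bits n | Aset m d && (wt d == r)]) f d0.
  by apply: eq_big => [d|d /andP [_ hd]]; [rewrite inE | apply: fe].
have -> : \sum_(d | predT d && (wt d == r)) f d = \sum_(d in [set d : bits n | wt d == r]) f d0.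
  by apply: eq_big => [d|d /andP [_ hd]]; [rewrite inE | apply: fe].
rewrite !sumr_const.
set a := #|_|; set w := #|_|.
rewrite -[f d0 *+ a]mulr_natr -[f d0 *+ w]mulr_natr mulrCA.
apply: ler_wpM2l => //.
rewrite mulrAC ler_pdivlMr // -natrM -[2 * w%:R]natrM ler_nat.
by rewrite /a /w; apply: nat_AW.
Qed.

Local Open Scope ring_scope.

Definition P0 n m (x : bits n) : bool :=
  [forall i : 'I_n, (i < 2 * m + 2)%N ==> (tnth x i == (i < 2 * m)%N)].

Lemma xor_self n (x : bits n) : xor_bits x x = zb n.
Proof. by apply: eq_from_tnth => i; rewrite /xor_bits /zb /mk !tnth_mktuple addbb. Qed.

Lemma A_xor n m (x y : bits n) : pre1 (2 * m + 2) y -> Aset m (xor_bits x y) = P0 m x.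
Proof.
move=> /forallP hy; apply: eq_forallb => i /=.
case: (ltnP i (2 * m + 2)) => hi //=.
have := hy i; rewrite hi /= => ty; rewrite /xor_bits tnth_mktuple ty addbT ltnNge.
by case: (tnth x i); case: (2 * m <= i)%N.
Qed.

Lemma P1_xor n m (x : bits n) :
  pre1 (2 * m + 2) (xor_bits x (mk n (fun i => (2 * m <= i)%N && (i < 2 * m + 2)%N))) = P0 m x.
Proof.
apply: eq_forallb => i /=.
case: (ltnP i (2 * m + 2)) => hi //=.
rewrite /xor_bits /mk !tnth_mktuple hi andbT ltnNge.
by case: (tnth x i); case: (2 * m <= i)%N.
Qed.

Lemma dlb_P0 n m (x : bits n) : n = (2 * n./2)%N -> DLB x = (2 * m).+1 -> P0 m x.
Proof.
move=> hn hd; have [_ _ h1 h2 h3] := dlb_x hn hd.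
apply/forallP => i; apply/implyP => hi; rewrite -bit_tnth.
case: (ltnP i (2 * m)) => h; first by rewrite h1.
have : (nat_of_ord i = 2 * m \/ nat_of_ord i = (2 * m).+1)%N by lia.
by case=> ->; [rewrite (negbTE h2) | rewrite (negbTE h3)].
Qed.

Lemma final_arith (R : realFieldType) n : (2 <= n)%N ->
  4 * (2 / (n * (n - 1))%:R) <= 16%:R / n%:R ^+ 2 :> R.
Proof.
move=> hn.
have a2 : (2%:R : R) <= n%:R by rewrite ler_nat.
rewrite natrM natrB; last lia.
have hpos : 0 < n%:R * (n%:R - 1%:R) :> R by apply: mulr_gt0; lra.
have hpos2 : 0 < n%:R ^+ 2 :> R by rewrite exprn_gt0 //; lra.
rewrite mulrA ler_pdivrMr // mulrAC ler_pdivlMr //.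
rewrite expr2; nra.
Qed.

Unset Implicit Arguments.
Local Open Scope ring_scope.

Lemma agree_eq n k (x w : bits n) : agree_prefix k x w && agree_suffix k x w = (x == w).
Proof.
apply/idP/eqP => [/andP [/forallP h1 /forallP h2] | ->].
  apply: eq_from_tnth => i; case: (ltnP i k) => hi.
    by have := h1 i; rewrite hi => /eqP.
  by have := h2 i; rewrite hi => /eqP.
by apply/andP; split; apply/forallP => i; rewrite eqxx implybT.
Qed.

Lemma P0_agree n m (x w : bits n) : P0 m x -> P0 m w -> agree_prefix (2 * m + 2) x w.
Proof.
move=> /forallP h1 /forallP h2; apply/forallP => i; apply/implyP => hi.
by have := h1 i; have := h2 i; rewrite hi /= => /eqP -> /eqP ->.
Qed.

Theorem lemma8 (R : realFieldType) (n m : nat) (delta : R)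
  (p : bits n -> R) (V : bits n -> bits n -> R) :
  (0 < n)%N -> ~~ odd n ->
  (n <= 3 * m)%N -> (2 * m + 2 <= n)%N ->
  0 < delta -> delta < 2 ->
  is_distr p ->
  (forall x, p x != 0 -> DLB x = (2 * m).+1) ->
  (* bits x_i, i in [2m+3..n], are mutually independent, uniform, and
     independent of the other bits *)
  (forall u w : bits n,
      \sum_(x : bits n | agree_prefix (2 * m + 2) x u && agree_suffix (2 * m + 2) x w) p x
      = (\sum_(x : bits n | agree_prefix (2 * m + 2) x u) p x) / 2%:R ^+ (n - (2 * m + 2))) ->
  unary_unbiased V ->
  \sum_(x : bits n) \sum_(y : bits n)
      p x * V x y * (if (DLB x <= DLB y)%N then HLB delta y - HLB delta x else 0)
  <= 16%:R / n%:R ^+ 2.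
Proof.
move=> n0 nodd hm3 hmn d0 d2 [p0 p1] hsupp hind hV.
have hn : n = (2 * n./2)%N.
  by have := odd_double_half n; rewrite (negbTE nodd) add0n -muln2; lia.
have hV' := hV; case: hV' => V0 V1 Vx Vp.
have hPs : forall x, p x != 0 -> P0 m x := fun x h => dlb_P0 hn (hsupp x h).
have psum : forall Q : pred (bits n), (forall x, P0 m x -> Q x) -> \sum_(x | Q x) p x = 1.
  move=> Q hQ; rewrite -p1 [RHS](bigID Q) /= [X in _ = _ + X]big1 ?addr0 // => x hx.
  by apply/eqP; apply: contraR hx => /hPs /hQ.
set c0 : R := 1 / 2%:R ^+ (n - (2 * m + 2)).
have hp0 : forall w, P0 m w -> p w = c0.
  move=> w hw; have := hind w w.
  rewrite (big_pred1 w) => [->|x]; last by rewrite agree_eq.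
  by rewrite psum // => x hx; apply: P0_agree.
have c0ge : 0 <= c0 by rewrite divr_ge0 // exprn_ge0.
pose h' (y : bits n) := if pre1 (2 * m + 2) y then HLB delta y - (2 * m)%:R else 0.
have h'ge : forall y, 0 <= h' y.
  move=> y; rewrite /h'; case: ifP => // hy; rewrite subr_ge0.
  by apply: (hlb_pre hn hmn d2); apply/(pre1P _ hmn).
apply: (@le_trans _ _ (\sum_(x : bits n) \sum_(y : bits n) (if P0 m x then c0 else 0) * V x y * h' y)).
  apply: ler_sum => x _; apply: ler_sum => y _.
  have nn : 0 <= c0 * V x y * h' y by apply: mulr_ge0 => //; apply: mulr_ge0.
  case: (eqVneq (p x) 0) => hpx.
    by rewrite hpx !mul0r; case: (P0 m x); rewrite ?mul0r.
  have hx := hPs x hpx; have dx := hsupp x hpx.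
  rewrite hx (hp0 x hx) (hlb_x delta hn dx).
  case: ifP => hle; last by rewrite mulr0.
  rewrite dx in hle.
  case: (dlb_y delta hn hmn hle) => [hy | hy].
    have hy' : pre1 (2 * m + 2) y by apply/(pre1P _ hmn).
    by rewrite /h' hy'.
  by rewrite hy subrr mulr0.
set Q := \sum_(d : bits n | Aset m d) V (zb n) d.
have hQ : forall y, pre1 (2 * m + 2) y -> \sum_(x | P0 m x) V x y = Q.
  move=> y hy; rewrite /Q (reindex_xor y (Aset m)) /=.
  apply: eq_big => [x | x hx]; first by rewrite A_xor.
  by rewrite (Vx x y x) xor_self xorC.
have -> : \sum_(x : bits n) \sum_(y : bits n) (if P0 m x then c0 else 0) * V x y * h' y
    = c0 * Q * \sum_(y : bits n) h' y.
  rewrite exchange_big mulr_sumr; apply: eq_bigr => y _.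
  rewrite -mulr_suml.
  case hy: (pre1 (2 * m + 2) y); last by rewrite /h' hy !mulr0.
  congr (_ * _); rewrite -(hQ y hy) mulr_sumr [RHS]big_mkcond /=.
  by apply: eq_bigr => x _; case: ifP => _; rewrite ?mul0r.
have hs := hlb_sum hn d0 (t := (n./2 - m.+1)%N) (a := m.+1) ltac:(lia).
rewrite (_ : (2 * m.+1 = 2 * m + 2)%N) in hs; last by lia.
have hsum4 : \sum_(y : bits n) h' y <= \sum_(y : bits n | pre1 (2 * m + 2) y) 4.
  rewrite /h' -big_mkcond /=.
  have -> : \sum_(y : bits n | pre1 (2 * m + 2) y) (HLB delta y - (2 * m)%:R) =
      \sum_(y : bits n | pre1 (2 * m + 2) y) (HLB delta y - (2 * m + 2 + 2)%:R) + \sum_(y : bits n | pre1 (2 * m + 2) y) 4.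
    rewrite -big_split /=; apply: eq_bigr => y _; rewrite !natrD; ring.
  lra.
have hc1 : c0 * \sum_(y : bits n | pre1 (2 * m + 2) y) 4 = 4.
  rewrite mulr_sumr.
  have -> : \sum_(y : bits n | pre1 (2 * m + 2) y) c0 * 4 = \sum_(y : bits n | pre1 (2 * m + 2) y) 4 * c0.
    by apply: eq_bigr => y _; rewrite mulrC.
  rewrite -mulr_sumr (reindex_xor (mk n (fun i => (2 * m <= i)%N && (i < 2 * m + 2)%N))) /=.
  rewrite (eq_bigl (fun x => P0 m x)); last by move=> x; rewrite P1_xor.
  have -> : \sum_(x : bits n | P0 m x) c0 = \sum_(x : bits n | P0 m x) p x.
    by apply: eq_bigr => x hx; rewrite hp0.
  by rewrite psum ?mulr1.
have Q0 : 0 <= Q by apply: sumr_ge0 => d _.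
have Qb : Q <= 2 / (n * (n - 1))%:R.
  apply: Q_bound => //; last by lia.
  exact: f_inv.
apply: (@le_trans _ _ (4 * (2 / (n * (n - 1))%:R))); last by apply: final_arith; lia.
apply: (@le_trans _ _ (c0 * Q * \sum_(y : bits n | pre1 (2 * m + 2) y) 4)).
  by apply: ler_wpM2l => //; apply: mulr_ge0.
rewrite mulrAC hc1.
by apply: ler_wpM2l.
Qed.
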